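(* Let $B$ be a finite one-generator skew brace, $x\in B$ with $B=B(x)$, and $C:=\langle x\rangle$ (the sub-q-cycle set of $B$ generated by $x$). Then the subgroup of $(B,\circ)$ generated by $C$ is $B$.
   Context: A skew brace is a triple $(B,+,\circ)$ where $(B,+)$ and $(B,\circ)$ are groups and $a\circ(b+c)=a\circ b-a+a\circ c$; $a^-$ is the inverse in $(B,\circ)$, $\lambda_a(b):=-a+a\circ b$, $\delta_a(b):=a\circ b-a$. $B(x)$ is the smallest subset containing $x$ that is a subgroup of both $(B,+)$ and $(B,\circ)$. $B$ is a q-cycle set via $a\cdot b:=\lambda_{a^-}(b)$, $a:b:=\delta_{a^-}(b)$, where a q-cycle set is a non-empty set with operations $\cdot,:$ such that each $y\mapsto x\cdot y$ is bijective and $(x\cdot y)\cdot(x\cdot z)=(y:x)\cdot(y\cdot z)$, $(x:y):(x:z)=(y\cdot x):(y:z)$, $(x\cdot y):(x\cdot z)=(y:x)\cdot(y:z)$. A sub-q-cycle set is a subset that is a q-cycle set under the restricted operations, and $\langle x\rangle$ is the smallest one containing $x$. *)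

(* Defs.v *)
From mathcomp Require Import all_boot.
Set Implicit Arguments. Unset Strict Implicit. Unset Printing Implicit Defensive.

Record skew_brace (T : finType) := SkewBrace {
  add : T -> T -> T;
  neg : T -> T;
  zero : T;
  comp : T -> T -> T;
  cinv : T -> T;
  one : T;
  addA : forall a b c, add a (add b c) = add (add a b) c;
  add0x : forall a, add zero a = a;
  addx0 : forall a, add a zero = a;
  addNx : forall a, add (neg a) a = zero;
  addxN : forall a, add a (neg a) = zero;
  compA : forall a b c, comp a (comp b c) = comp (comp a b) c;
  comp1x : forall a, comp one a = a;
  compx1 : forall a, comp a one = a;
  compVx : forall a, comp (cinv a) a = one;
  compxV : forall a, comp a (cinv a) = one;
  brace_compat : forall a b c,
    comp a (add b c) = add (add (comp a b) (neg a)) (comp a c)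
}.

Section Defs.
Variables (T : finType) (B : skew_brace T).

Local Notation "a + b" := (add B a b).
Local Notation "- a" := (neg B a).
Local Notation "a 'o' b" := (comp B a b) (at level 40, left associativity).

Definition lambda (a b : T) : T := - a + (a o b).
Definition delta (a b : T) : T := (a o b) + - a.

Definition qdot (a b : T) : T := lambda (cinv B a) b.
Definition qcol (a b : T) : T := delta (cinv B a) b.

Definition is_add_subgroup (S : {set T}) : Prop :=
  zero B \in S /\ (forall a b, a \in S -> b \in S -> a + b \in S) /\
  (forall a, a \in S -> - a \in S).

Definition is_comp_subgroup (S : {set T}) : Prop :=
  one B \in S /\ (forall a b, a \in S -> b \in S -> a o b \in S) /\
  (forall a, a \in S -> cinv B a \in S).

Definition in_brace_gen (x y : T) : Prop :=
  forall S : {set T}, x \in S -> is_add_subgroup S -> is_comp_subgroup S ->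
    y \in S.

Definition is_sub_qcycle_set (S : {set T}) : Prop :=
  (exists a, a \in S) /\
  (forall a b, a \in S -> b \in S -> qdot a b \in S) /\
  (forall a b, a \in S -> b \in S -> qcol a b \in S) /\
  (forall a, a \in S ->
     (forall y1 y2, y1 \in S -> y2 \in S -> qdot a y1 = qdot a y2 -> y1 = y2) /\
     (forall z, z \in S -> exists2 y, y \in S & qdot a y = z)) /\
  (forall a b c, a \in S -> b \in S -> c \in S ->
     [/\ qdot (qdot a b) (qdot a c) = qdot (qcol b a) (qdot b c),
         qcol (qcol a b) (qcol a c) = qcol (qdot b a) (qcol b c) &
         qcol (qdot a b) (qdot a c) = qdot (qcol b a) (qcol b c)]).

Definition in_qcycle_gen (x y : T) : Prop :=
  forall S : {set T}, x \in S -> is_sub_qcycle_set S -> y \in S.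

Definition in_comp_subgroup_gen (P : T -> Prop) (y : T) : Prop :=
  forall H : {set T}, is_comp_subgroup H -> (forall c, P c -> c \in H) ->
    y \in H.

End Defs.

(* Main.v *)
From Stdlib Require Import ClassicalEpsilon.
Require Import Defs.
From mathcomp Require Import all_boot.
Set Implicit Arguments. Unset Strict Implicit. Unset Printing Implicit Defensive.

Lemma surj_on (T : finType) (f : T -> T) (S : {set T}) :
  injective f -> (forall y, y \in S -> f y \in S) ->
  forall z, z \in S -> exists2 y, y \in S & f y = z.
Proof.
move=> inj hS z zS.
have sub : f @: S \subset S by apply/subsetP=> _ /imsetP[y yS ->]; exact: hS.
have : f @: S == S by rewrite eqEcard sub (card_imset _ inj) leqnn.
move/eqP=> E; have : z \in f @: S by rewrite E.
case/imsetP=> y yS ->; by exists y.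
Qed.

Definition decP (T : Type) (P : T -> Prop) : pred T :=
  fun y => if excluded_middle_informative (P y) then true else false.

Lemma decPE (T : Type) (P : T -> Prop) y : decP P y <-> P y.
Proof. rewrite /decP; case: excluded_middle_informative => //. Qed.

Section Proof.
Variables (T : finType) (B : skew_brace T).
Local Notation "a + b" := (add B a b).
Local Notation "- a" := (neg B a).
Local Notation "a '*o' b" := (Defs.comp B a b) (at level 40, left associativity).

Local Notation lam := (lambda B).

Lemma addK a b c : a + b = a + c -> b = c.
Proof. move=> h; by rewrite -(add0x B b) -(addNx B a) -addA h addA addNx add0x. Qed.
Lemma compK a b c : a *o b = a *o c -> b = c.
Proof. move=> h; by rewrite -(Defs.comp1x B b) -(Defs.compVx B a) -Defs.compA h Defs.compA Defs.compVx Defs.comp1x. Qed.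

Lemma negK a : - - a = a.
Proof. apply: (@addK (- a)); by rewrite addNx addxN. Qed.

Lemma comp0 a : a *o zero B = a.
Proof.
have := brace_compat B a (zero B) (zero B); rewrite add0x => h.
have : (a *o zero B) + zero B = (a *o zero B) + (- a + (a *o zero B)).
  by rewrite addx0 addA -h.
move/addK=> h2.
have -> : a *o zero B = a + (- a + a *o zero B) by rewrite addA addxN add0x.
by rewrite -h2 addx0.
Qed.

Lemma zero_one : zero B = Defs.one B.
Proof. by rewrite -(Defs.comp1x B (zero B)) comp0. Qed.

Lemma neg0 : - zero B = zero B.
Proof. by rewrite -(add0x B (- zero B)) addxN. Qed.

Lemma compN a b : a *o (- b) = a + - (a *o b) + a.
Proof.
have := brace_compat B a b (- b); rewrite addxN comp0 => h.
apply: (@addK (a *o b + - a)); rewrite -h !addA.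
by rewrite -(addA B _ (- a) a) addNx addx0 addxN add0x.
Qed.

Lemma lam_inj a : injective (lam a).
Proof. by move=> b c; rewrite /lambda => /addK /compK. Qed.

Lemma lam1 b : lam (Defs.one B) b = b.
Proof. by rewrite /lambda Defs.comp1x -zero_one neg0 add0x. Qed.

Lemma lamM a b c : lam a (lam b c) = lam (a *o b) c.
Proof.
rewrite /lambda brace_compat compN Defs.compA.
rewrite !addA addNx add0x -!addA; congr (_ + _).
by rewrite addA addxN add0x.
Qed.

Lemma lamD a u v : lam a (u + v) = lam a u + lam a v.
Proof. by rewrite /lambda brace_compat !addA. Qed.

Lemma comp_lam a b : a *o b = a + lam a b.
Proof. by rewrite /lambda addA addxN add0x. Qed.

Lemma add_comp a b : a + b = a *o lam ((cinv B a)) b.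
Proof. by rewrite comp_lam lamM Defs.compxV lam1. Qed.

Lemma fin_inv (S : {set T}) a :
  Defs.one B \in S -> (forall u v, u \in S -> v \in S -> u *o v \in S) ->
  a \in S -> (cinv B a) \in S.
Proof.
move=> S1 SM aS.
have [y yS hy] := surj_on (f := Defs.comp B a) (S := S) (@compK a)
   (fun y yS => SM _ _ aS yS) S1.
by have <- : y = (cinv B a) by apply: (@compK a); rewrite hy Defs.compxV.
Qed.

Lemma fin_neg (S : {set T}) a :
  zero B \in S -> (forall u v, u \in S -> v \in S -> u + v \in S) ->
  a \in S -> - a \in S.
Proof.
move=> S1 SM aS.
have [y yS hy] := surj_on (f := add B a) (S := S) (@addK a)
   (fun y yS => SM _ _ aS yS) S1.
by have <- : y = - a by apply: (@addK a); rewrite hy addxN.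
Qed.

End Proof.

Theorem mainTheorem20 (T : finType) (B : skew_brace T) (x : T) :
  (forall y : T, in_brace_gen B x y) ->
  forall y : T, in_comp_subgroup_gen B (in_qcycle_gen B x) y.
Proof.
move=> hgen y H Hsub HC.
pose C : {set T} := [set y | decP (in_qcycle_gen B x) y].
pose G : {set T} := [set y | decP (in_comp_subgroup_gen B (in_qcycle_gen B x)) y].
have inC z : (z \in C) <-> in_qcycle_gen B x z by rewrite inE decPE.
have inG z : (z \in G) <-> in_comp_subgroup_gen B (in_qcycle_gen B x) z
  by rewrite inE decPE.
have C1 a b : a \in C -> b \in C -> lambda B (cinv B a) b \in C.
  move=> /inC ha /inC hb; apply/inC=> S xS Sq.
  by case: (Sq) => _ [hd _]; apply: hd; [apply: ha | apply: hb].
have C2 a c : a \in C -> c \in C -> lambda B a c \in C.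
  move=> aC cC.
  have [b bC hb] := surj_on (@lam_inj _ B (cinv B a)) (C1 a ^~ aC) cC.
  by rewrite -hb lamM Defs.compxV lam1.
pose K : {set T} := [set g | [forall c, (c \in C) ==> (lambda B g c \in C)]].
have inK g : (g \in K) <-> (forall c, c \in C -> lambda B g c \in C).
  rewrite inE; split; first by move=> /forallP h c cC; exact: (implyP (h c) cC).
  by move=> h; apply/forallP=> c; apply/implyP; exact: h.
have K1 : Defs.one B \in K by apply/inK=> c cC; rewrite lam1.
have KM u v : u \in K -> v \in K -> Defs.comp B u v \in K.
  move=> /inK hu /inK hv; apply/inK=> c cC; rewrite -lamM; exact/hu/hv.
have Ksub : is_comp_subgroup B K.
  split=> //; split=> //; move=> a aK; exact: fin_inv.
have GK g : g \in G -> g \in K.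
  move=> /inG h; apply: h => // c /inC cC; apply/inK=> d dC; exact: C2.
have CG c : c \in C -> c \in G.
  move=> cC; apply/inG=> H' _ h; apply: h; exact/inC.
have Gsub : is_comp_subgroup B G.
  split; first by apply/inG=> H' [] //.
  split.
    move=> a b /inG ha /inG hb; apply/inG=> H' hH' hc.
    by case: (hH') => _ [hm _]; apply: hm; [apply: ha | apply: hb].
  move=> a /inG ha; apply/inG=> H' hH' hc.
  by case: (hH') => _ [_ hi]; apply: hi; apply: ha.
case: (Gsub) => G1 [GM GV].
pose L : {set T} := [set k in G | [forall g, (g \in G) ==> (lambda B g k \in G)]].
have inL k : (k \in L) <-> (k \in G /\ forall g, g \in G -> lambda B g k \in G).
  rewrite inE; split.
    by move=> /andP[kG /forallP h]; split=> // g gG; exact: (implyP (h g) gG).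
  by move=> [kG h]; rewrite kG /=; apply/forallP=> g; apply/implyP; exact: h.
have L1 : Defs.one B \in L.
  apply/inL; split=> // g _; by rewrite /lambda -zero_one comp0 addNx zero_one.
have LM u v : u \in L -> v \in L -> Defs.comp B u v \in L.
  move=> /inL [uG hu] /inL [vG hv]; apply/inL; split; first exact: (GM).
  move=> g gG; rewrite comp_lam lamD lamM add_comp lamM.
  apply: (GM); first exact: hu.
  apply: hv; apply: (GM); [apply: (GV); exact: hu | exact: (GM)].
have Lsub : is_comp_subgroup B L.
  split=> //; split=> //; move=> a aL; exact: fin_inv.
have GL g : g \in G -> g \in L.
  move=> /inG h; apply: h => // c /inC cC; apply/inL; split; first by apply: (CG).
  move=> g' g'G; apply: (CG); exact: (proj1 (inK _) (GK _ g'G)).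
have Gadd : is_add_subgroup B G.
  have G0 : zero B \in G by rewrite zero_one.
  have GA : forall a b, a \in G -> b \in G -> add B a b \in G.
    move=> a b aG bG; rewrite add_comp; apply: (GM) => //.
    by case/inL: (GL _ bG) => _; apply; apply: (GV).
  split=> //; split=> // a aG; exact: fin_neg.
have xG : x \in G by apply: (CG); apply/inC=> S.
have yG : y \in G := hgen y G xG Gadd Gsub.
by move/inG: yG; apply.
Qed.
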